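(* Let $R$ be any BST on $[n]$ (the reference tree). Assign to every BST $T$ on $[n]$ the potential $\phi_R(T)=\sum_{i=1}^n\bigl(-2\min_{j\in T(i)} d_R(j)\bigr)$, where $T(i)$ is the set of keys in the subtree of $T$ rooted at $i$ and $d_R(j)$ is the depth of $j$ in $R$ (root at depth $0$). There is an absolute constant $c$ such that for every BST $T$ on $[n]$ and every key $i$, if splaying $i$ transforms $T$ into $T'$, then $\mathrm{cost}+\phi_R(T')-\phi_R(T)\le c\,(1+d_R(i))$.
   Context: Splaying a key $i$ (Sleator–Tarjan splay tree) brings $i$ to the root by a sequence of zig-zig and zig-zag steps, each consisting of two rotations, possibly followed by one final zig step consisting of a single rotation. Each zig-zig or zig-zag step costs $2$ and a zig step costs $1$. Here $\mathrm{cost}$ denotes the total cost of the splay of $i$ in $T$, i.e. the number of rotations performed, which equals the depth of $i$ in $T$. *)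

(* Defs.v *)
From mathcomp Require Import all_boot all_order all_algebra.
Set Implicit Arguments. Unset Strict Implicit. Unset Printing Implicit Defensive.
Import Order.TTheory GRing.Theory Num.Theory.

Inductive tree : Type := Leaf | Node of tree & nat & tree.

Fixpoint inorder (t : tree) : seq nat :=
  match t with Leaf => [::] | Node l k r => inorder l ++ k :: inorder r end.

Definition is_bst_on (n : nat) (t : tree) : bool := inorder t == iota 1 n.

Fixpoint depth (k : nat) (t : tree) : nat :=
  match t with
  | Leaf => 0
  | Node l x r => if k == x then 0 else if k < x then (depth k l).+1 else (depth k r).+1
  end.

Fixpoint subtree (k : nat) (t : tree) : tree :=
  match t with
  | Leaf => Leaf
  | Node l x r => if k == x then t else if k < x then subtree k l else subtree k r
  end.

Definition seqmin (s : seq nat) : nat :=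
  match s with [::] => 0 | x :: s' => foldr minn x s' end.

Definition minD (R T : tree) (i : nat) : nat :=
  seqmin (map (fun j => depth j R) (inorder (subtree i T))).

Definition phi (n : nat) (R T : tree) : int :=
  (\sum_(1 <= i < n.+1) (- (2 * minD R T i)%:Z))%R.

(* Exact when the key is at even depth. *)
Fixpoint splay_even (a : nat) (t : tree) : tree :=
  match t with
  | Leaf => Leaf
  | Node l b r =>
    if a == b then t else
    if a < b then
      match l with
      | Leaf => t
      | Node ll c lr =>
        if a == c then t else
        if a < c then
          match splay_even a ll with
          | Node A x B => Node A x (Node B c (Node lr b r))
          | Leaf => t
          end
        else
          match splay_even a lr with
          | Node A x B => Node (Node ll c A) x (Node B b r)
          | Leaf => t
          end
      end
    else
      match r with
      | Leaf => t
      | Node rl c rr =>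
        if a == c then t else
        if c < a then
          match splay_even a rr with
          | Node A x B => Node (Node (Node l b rl) c A) x B
          | Leaf => t
          end
        else
          match splay_even a rl with
          | Node A x B => Node (Node l b A) x (Node B c rr)
          | Leaf => t
          end
      end
  end.

(* Sleator–Tarjan (bottom-up) splay of key a: if a is at even depth, only
   double steps are used; if at odd depth, the double steps bring a to a child
   of the root, followed by a final zig at the root. *)
Definition splay (a : nat) (t : tree) : tree :=
  if ~~ odd (depth a t) then splay_even a t else
  match t with
  | Leaf => Leaf
  | Node l b r =>
    if a < b then
      match splay_even a l with
      | Node A x B => Node A x (Node B b r)
      | Leaf => t
      end
    else
      match splay_even a r with
      | Node A x B => Node (Node l b A) x B
      | Leaf => t
      end
  end.

(* cost of splaying a in t = number of rotations = depth of a in t. *)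
Definition cost (a : nat) (t : tree) : nat := depth a t.

(* Main.v *)
Require Import Defs.
From mathcomp Require Import all_boot all_order all_algebra.
From mathcomp Require Import zify.
Import Order.TTheory GRing.Theory Num.Theory.

Definition Ms (R : tree) (s : seq nat) : nat := seqmin (map (fun j => depth j R) s).
Definition M (R t : tree) : nat := Ms R (inorder t).
Arguments Ms : simpl never.
Arguments M : simpl never.
Fixpoint P (R t : tree) : nat :=
  match t with Leaf => 0 | Node l k r => M R t + P R l + P R r end.

Lemma foldr_min_le x s y : y \in x :: s -> foldr minn x s <= y.
Proof.
elim: s y => [|z s IH] y /=; first by rewrite inE => /eqP ->.
rewrite !inE => /orP [/eqP-> | /orP [/eqP-> | H]].
- have := IH x; rewrite inE eqxx => /(_ isT); lia.
- lia.
- have := IH y; rewrite inE H orbT => /(_ isT); lia.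
Qed.

Lemma foldr_min_in x s : foldr minn x s \in x :: s.
Proof.
elim: s => [|z s IH] /=; first by rewrite inE.
have [e|e] : minn z (foldr minn x s) = z \/ minn z (foldr minn x s) = foldr minn x s by lia.
- by rewrite e !inE eqxx orbT.
- rewrite e; move: IH; rewrite !inE => /orP [->|->] //; by rewrite !orbT.
Qed.

Lemma Ms_le R s j : j \in s -> Ms R s <= depth j R.
Proof.
case: s => [//|x s] Hj; rewrite /Ms /=; apply: foldr_min_le.
exact: (map_f (fun j => depth j R) Hj).
Qed.

Lemma Ms_in R (s : seq nat) : s != [::] -> exists2 j, j \in s & depth j R = Ms R s.
Proof.
case: s => [//|x s] _.
have H : foldr minn (depth x R) (map (fun j => depth j R) s) \in map (fun j => depth j R) (x :: s)
  := foldr_min_in _ _.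
case/mapP: H => j Hj E; exists j => //.
Qed.

Lemma Ms_sub R (s1 s2 : seq nat) : s1 != [::] -> {subset s1 <= s2} -> Ms R s2 <= Ms R s1.
Proof.
move=> n1 sub; have [j j1 <-] := Ms_in R _ n1; apply: Ms_le; exact: sub.
Qed.

Lemma M_sub R l k r t2 : {subset inorder (Node l k r) <= inorder t2} -> M R t2 <= M R (Node l k r).
Proof. move=> H; apply: Ms_sub => //=; by case: (inorder l). Qed.

Definition contig (s : seq nat) := forall j k u, j \in s -> k \in s -> j <= u <= k -> u \in s.

Definition Inv R t := [/\ pairwise ltn (inorder t), contig (inorder t) & {subset inorder t <= inorder R}].

Lemma node_facts l b r : pairwise ltn (inorder (Node l b r)) ->
  [/\ {in inorder l, forall j, j < b}, {in inorder r, forall k, b < k},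
      pairwise ltn (inorder l) & pairwise ltn (inorder r)].
Proof.
rewrite /= pairwise_cat /= => /and3P [/allrelP H1 H2 /andP [/allP H3 H4]].
split => //; move=> j Hj; apply: H1 => //; exact: mem_head.
Qed.
Arguments node_facts {l b r}.


Lemma sep_pair (p q s1 s2 : seq nat) j k : pairwise ltn (p ++ q) -> {subset s1 <= p} -> {subset s2 <= q} ->
  j \in s1 -> k \in s2 -> j < k.
Proof.
rewrite pairwise_cat => /and3P [/allrelP H _ _] h1 h2 j1 k2; apply: H; [exact: h1|exact: h2].
Qed.

Lemma mem_l a l b r : pairwise ltn (inorder (Node l b r)) -> a \in inorder (Node l b r) -> a < b -> a \in inorder l.
Proof.
move=> Hp; have [_ Hr _ _] := node_facts Hp.
rewrite /= mem_cat inE => /orP [//|/orP [/eqP e|H]] h; first lia.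
have := Hr a H; lia.
Qed.
Arguments mem_l {a l b r}.


Lemma mem_r a l b r : pairwise ltn (inorder (Node l b r)) -> a \in inorder (Node l b r) -> b < a -> a \in inorder r.
Proof.
move=> Hp; have [Hl _ _ _] := node_facts Hp.
rewrite /= mem_cat inE => /orP [H|/orP [/eqP e|//]] h; last lia.
have := Hl a H; lia.
Qed.
Arguments mem_r {a l b r}.


Lemma inv_l R l b r : Inv R (Node l b r) -> Inv R l.
Proof.
case=> Hp Hc HR; have [Hl Hr pl pr] := node_facts Hp; split => //.
- move=> j k u Hj Hk Hu.
  have Hu' : u \in inorder (Node l b r).
    apply: (Hc j k) => //=; rewrite mem_cat ?Hj ?Hk //.
  apply: (mem_l Hp Hu'); have := Hl k Hk; lia.
- move=> x Hx; apply: HR; by rewrite /= mem_cat Hx.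
Qed.
Arguments inv_l {R l b r}.


Lemma inv_r R l b r : Inv R (Node l b r) -> Inv R r.
Proof.
case=> Hp Hc HR; have [Hl Hr pl pr] := node_facts Hp; split => //.
- move=> j k u Hj Hk Hu.
  have Hu' : u \in inorder (Node l b r).
    apply: (Hc j k) => //=; rewrite mem_cat inE ?Hj ?Hk ?orbT //.
  apply: (mem_r Hp Hu'); have := Hr j Hj; lia.
- move=> x Hx; apply: HR; by rewrite /= mem_cat inE Hx !orbT.
Qed.
Arguments inv_r {R l b r}.


Lemma depth_l a l b r : a < b -> depth a (Node l b r) = (depth a l).+1.
Proof. by move=> h; rewrite /= (ltn_eqF h) h. Qed.
Lemma depth_r a l b r : b < a -> depth a (Node l b r) = (depth a r).+1.
Proof. by move=> h; rewrite /= (gtn_eqF h) ltnNge (ltnW h). Qed.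
Lemma subtree_l a l b r : a < b -> subtree a (Node l b r) = subtree a l.
Proof. by move=> h; rewrite /= (ltn_eqF h) h. Qed.
Lemma subtree_r a l b r : b < a -> subtree a (Node l b r) = subtree a r.
Proof. by move=> h; rewrite /= (gtn_eqF h) ltnNge (ltnW h). Qed.

Lemma subtree_mem a t : pairwise ltn (inorder t) -> a \in inorder t -> a \in inorder (subtree a t).
Proof.
elim: t => [//|l IHl b r IHr] Hp Ha; have [_ _ pl pr] := node_facts Hp.
case: (ltngtP a b) => h.
- rewrite subtree_l //; apply: IHl => //; exact: mem_l Hp Ha h.
- rewrite subtree_r //; apply: IHr => //; exact: mem_r Hp Ha h.
- by rewrite h /= eqxx mem_cat inE eqxx orbT.
Qed.

Lemma lca R j k : pairwise ltn (inorder R) -> j \in inorder R -> k \in inorder R -> j < k ->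
  exists u, [/\ j <= u <= k, (u == j) || (depth u R < depth j R) & (u == k) || (depth u R < depth k R)].
Proof.
elim: R j k => [//|l IHl x r IHr] j k Hp Hj Hk Hjk.
have [Hl Hr pl pr] := node_facts Hp.
case: (ltnP k x) => Hkx.
  have Hjx : j < x by lia.
  have [u [Hu H1 H2]] := IHl j k pl (mem_l Hp Hj Hjx) (mem_l Hp Hk Hkx) Hjk.
  have Hux : u < x by lia.
  exists u; rewrite (@depth_l _ _ _ _ Hux) (@depth_l _ _ _ _ Hjx) (@depth_l _ _ _ _ Hkx) !ltnS; split => //.
case: (ltnP x j) => Hxj.
  have Hxk : x < k by lia.
  have [u [Hu H1 H2]] := IHr j k pr (mem_r Hp Hj Hxj) (mem_r Hp Hk Hxk) Hjk.
  have Hux : x < u by lia.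
  exists u; rewrite (@depth_r _ _ _ _ Hux) (@depth_r _ _ _ _ Hxj) (@depth_r _ _ _ _ Hxk) !ltnS; split => //.
exists x; split; first lia.
- case: (ltngtP j x) => h; first by rewrite (@depth_l _ _ _ _ h) /= eqxx ?orbT.
  + lia.
  + by apply/orP; left; apply/eqP.
- case: (ltngtP k x) => h; first lia.
  + by rewrite (@depth_r _ _ _ _ h) /= eqxx ?orbT.
  + by apply/orP; left; apply/eqP.
Qed.
Arguments lca {R j k}.


Lemma sep R (S s1 s2 : seq nat) : pairwise ltn (inorder R) -> {subset S <= inorder R} -> contig S ->
  {subset s1 <= S} -> {subset s2 <= S} -> s1 != [::] -> s2 != [::] ->
  (forall j k, j \in s1 -> k \in s2 -> j < k) ->
  Ms R s1 = Ms R S -> Ms R s2 = Ms R S -> False.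
Proof.
move=> pR SR cS s1S s2S n1 n2 lt e1 e2.
have [j j1 dj] := Ms_in R _ n1. have [k k2 dk] := Ms_in R _ n2.
have jk := lt j k j1 k2.
have [u [Hu H1 H2]] := lca pR (SR _ (s1S _ j1)) (SR _ (s2S _ k2)) jk.
have uS : u \in S by apply: (cS j k) => //; [exact: s1S | exact: s2S].
have := Ms_le R _ _ uS.
case/orP: H1 => [/eqP eu|h1]; case/orP: H2 => [/eqP ek|h2]; lia.
Qed.

Ltac subt := let x := fresh "x" in let H := fresh "H" in
  move=> x; rewrite /= ?(mem_cat, inE); move=> H;
  rewrite /is_true in H *; repeat (rewrite -> Bool.orb_true_iff in * ); tauto.

Fixpoint tsz t := match t with Leaf => 0 | Node l _ r => (tsz l + tsz r).+1 end.

Lemma nnil (a : nat) (s : seq nat) : a \in s -> s != [::].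
Proof. by case: s. Qed.
Arguments nnil {a s}.
Lemma node_nnil l k r : inorder (Node l k r) != [::].
Proof. by rewrite /=; case: (inorder l). Qed.

Lemma M_sub' R a t1 t2 : a \in inorder t1 -> {subset inorder t1 <= inorder t2} -> M R t2 <= M R t1.
Proof. move=> Ha H; apply: Ms_sub => //; exact: nnil Ha. Qed.
Arguments M_sub' R {a t1 t2}.

Lemma two_lt (x y z : nat) : x <= y -> x <= z -> (y = x -> z = x -> False) -> 2 * x < y + z.
Proof.
move=> h1 h2 h; have [E|E] := eqVneq y x; last by move/eqP: E; lia.
have [E'|E'] := eqVneq z x; last by move/eqP: E'; lia.
by exfalso; apply: h.
Qed.

Ltac catnorm := repeat (rewrite -catA /=).

Lemma se_main R (a : nat) : pairwise ltn (inorder R) -> forall (m : nat) (t : tree), tsz t <= m -> Inv R t ->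
  a \in inorder t -> ~~ odd (depth a t) ->
  exists A B, [/\ splay_even a t = Node A a B, inorder A ++ a :: inorder B = inorder t &
     depth a t + 2 * P R t + 6 * M R t <= 6 * M R (subtree a t) + 2 * P R (Node A a B)].
Proof.
move=> pR; elim=> [|m IH] t; first by case: t.
destruct t as [|l b r]; first by [].
move=> Hs Hi Ha Hd.
have [Hp Hc HR] := Hi.
case: (ltngtP a b) => hab.
- have Hal := mem_l Hp Ha hab.
  destruct l as [|ll c lr]; first by [].
  have Hil := inv_l Hi. have [pl cl Rl] := Hil.
  case: (ltngtP a c) => hac.
  +
    have Ha2 := mem_l pl Hal hac. have Hi2 := inv_l Hil.
    have Hd2 : ~~ odd (depth a ll).
      by move: Hd; rewrite (@depth_l _ _ _ _ hab) (@depth_l _ _ _ _ hac) /= !negbK.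
    have Hs2 : tsz ll <= m by move: Hs => /=; lia.
    have [A [B [e1 e2 e3]]] := IH ll Hs2 Hi2 Ha2 Hd2.
    exists A, (Node B c (Node lr b r)).
    have es : inorder (Node A a (Node B c (Node lr b r))) = inorder (Node (Node ll c lr) b r).
      by rewrite /= -e2; catnorm.
    split; [by rewrite /= (ltn_eqF hab) hab (ltn_eqF hac) hac e1 | exact: es |].
    have hM1 : M R (Node A a B) = M R ll by rewrite /M /= e2.
    have hMs : M R (Node A a (Node B c (Node lr b r))) = M R (Node (Node ll c lr) b r) by rewrite /M es.
    have f1 : M R (Node (Node ll c lr) b r) <= M R (Node ll c lr) by apply: M_sub; subt.
    have f2 : M R (Node ll c lr) <= M R ll by apply: (M_sub' R Ha2); subt.
    have f3 : M R (Node (Node ll c lr) b r) <= M R (Node B c (Node lr b r)) by apply: M_sub; rewrite -es; subt.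
    have f4 : M R (Node (Node ll c lr) b r) <= M R (Node lr b r) by apply: M_sub; subt.
    have f5 : M R ll = M R (Node (Node ll c lr) b r) -> M R (Node (Node ll c lr) b r) < M R (Node lr b r).
      move=> E; have [E2|E2] := eqVneq (M R (Node lr b r)) (M R (Node (Node ll c lr) b r)); last by move/eqP: E2; lia.
      exfalso; apply: (sep R (inorder (Node (Node ll c lr) b r)) (inorder ll) (inorder (Node lr b r)) pR HR Hc _ _ (nnil Ha2) (node_nnil _ _ _) _ E E2) => //.
      * subt.
      * subt.
      * move=> j k Hj Hk; apply: (sep_pair (inorder ll) (c :: inorder lr ++ b :: inorder r) (inorder ll) (inorder (Node lr b r)) j k _ _ _ Hj Hk) => //.
        -- by move: Hp; rewrite /= -catA.
        -- subt.
    have f5' : M R ll = M R (Node (Node ll c lr) b r) \/ M R ll <> M R (Node (Node ll c lr) b r).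
      by case: (eqVneq (M R ll) (M R (Node (Node ll c lr) b r))) => [E|/eqP E]; [left|right].
    rewrite (@depth_l _ _ _ _ hab) (@depth_l _ _ _ _ hac) (@subtree_l _ _ _ _ hab) (@subtree_l _ _ _ _ hac) /=.
    move: e3; rewrite /= hM1 => e3.
    case: f5' => E; [have := f5 E|]; lia.
  +
    have Ha2 := mem_r pl Hal hac. have Hi2 := inv_r Hil.
    have Hd2 : ~~ odd (depth a lr).
      by move: Hd; rewrite (@depth_l _ _ _ _ hab) (@depth_r _ _ _ _ hac) /= !negbK.
    have Hs2 : tsz lr <= m by move: Hs => /=; lia.
    have [A [B [e1 e2 e3]]] := IH lr Hs2 Hi2 Ha2 Hd2.
    exists (Node ll c A), (Node B b r).
    have es : inorder (Node (Node ll c A) a (Node B b r)) = inorder (Node (Node ll c lr) b r).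
      by rewrite /= -e2; catnorm.
    have hac' : (a < c) = false by rewrite ltnNge (ltnW hac).
    split; [by rewrite /= (ltn_eqF hab) hab (gtn_eqF hac) hac' e1 | exact: es |].
    have hM1 : M R (Node A a B) = M R lr by rewrite /M /= e2.
    have hMs : M R (Node (Node ll c A) a (Node B b r)) = M R (Node (Node ll c lr) b r) by rewrite /M es.
    have f1 : M R (Node (Node ll c lr) b r) <= M R (Node ll c lr) by apply: M_sub; subt.
    have f2 : M R (Node ll c lr) <= M R lr by apply: (M_sub' R Ha2); subt.
    have f3 : M R (Node (Node ll c lr) b r) <= M R (Node ll c A) by apply: M_sub; rewrite -es; subt.
    have f4 : M R (Node (Node ll c lr) b r) <= M R (Node B b r) by apply: M_sub; rewrite -es; subt.
    have f5 : 2 * M R (Node (Node ll c lr) b r) < M R (Node ll c A) + M R (Node B b r).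
      apply: two_lt => // E E2.
      apply: (sep R (inorder (Node (Node ll c lr) b r)) (inorder (Node ll c A)) (inorder (Node B b r)) pR HR Hc _ _ (node_nnil _ _ _) (node_nnil _ _ _) _ E E2).
      * rewrite -es; subt.
      * rewrite -es; subt.
      * move=> j k Hj Hk; apply: (sep_pair (inorder ll ++ c :: inorder A) (a :: inorder B ++ b :: inorder r) _ _ j k _ _ _ Hj Hk).
        -- have -> : (inorder ll ++ c :: inorder A) ++ a :: inorder B ++ b :: inorder r = inorder (Node (Node ll c lr) b r) by rewrite -es.
           exact: Hp.
        -- subt.
        -- subt.
    rewrite (@depth_l _ _ _ _ hab) (@depth_r _ _ _ _ hac) (@subtree_l _ _ _ _ hab) (@subtree_r _ _ _ _ hac) /=.
    move: e3; rewrite /= hM1 => e3; lia.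
  + subst; exfalso; move: Hd; rewrite (@depth_l _ _ _ _ hab) /= eqxx //.
- have Har := mem_r Hp Ha hab.
  destruct r as [|rl c rr]; first by [].
  have Hir := inv_r Hi. have [pr cr Rr] := Hir.
  have hab' : (a < b) = false by rewrite ltnNge (ltnW hab).
  case: (ltngtP a c) => hac.
  +
    have Ha2 := mem_l pr Har hac. have Hi2 := inv_l Hir.
    have Hd2 : ~~ odd (depth a rl).
      by move: Hd; rewrite (@depth_r _ _ _ _ hab) (@depth_l _ _ _ _ hac) /= !negbK.
    have Hs2 : tsz rl <= m by move: Hs => /=; lia.
    have [A [B [e1 e2 e3]]] := IH rl Hs2 Hi2 Ha2 Hd2.
    exists (Node l b A), (Node B c rr).
    have es : inorder (Node (Node l b A) a (Node B c rr)) = inorder (Node l b (Node rl c rr)).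
      by rewrite /= -e2; catnorm.
    have hca' : (c < a) = false by rewrite ltnNge (ltnW hac).
    split; [by rewrite /= (gtn_eqF hab) hab' (ltn_eqF hac) hca' e1 | exact: es |].
    have hM1 : M R (Node A a B) = M R rl by rewrite /M /= e2.
    have hMs : M R (Node (Node l b A) a (Node B c rr)) = M R (Node l b (Node rl c rr)) by rewrite /M es.
    have f1 : M R (Node l b (Node rl c rr)) <= M R (Node rl c rr) by apply: M_sub; subt.
    have f2 : M R (Node rl c rr) <= M R rl by apply: (M_sub' R Ha2); subt.
    have f3 : M R (Node l b (Node rl c rr)) <= M R (Node l b A) by apply: M_sub; rewrite -es; subt.
    have f4 : M R (Node l b (Node rl c rr)) <= M R (Node B c rr) by apply: M_sub; rewrite -es; subt.
    have f5 : 2 * M R (Node l b (Node rl c rr)) < M R (Node l b A) + M R (Node B c rr).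
      apply: two_lt => // E E2.
      apply: (sep R (inorder (Node l b (Node rl c rr))) (inorder (Node l b A)) (inorder (Node B c rr)) pR HR Hc _ _ (node_nnil _ _ _) (node_nnil _ _ _) _ E E2).
      * rewrite -es; subt.
      * rewrite -es; subt.
      * move=> j k Hj Hk; apply: (sep_pair (inorder l ++ b :: inorder A) (a :: inorder B ++ c :: inorder rr) _ _ j k _ _ _ Hj Hk).
        -- have -> : (inorder l ++ b :: inorder A) ++ a :: inorder B ++ c :: inorder rr = inorder (Node l b (Node rl c rr)) by rewrite -es.
           exact: Hp.
        -- subt.
        -- subt.
    rewrite (@depth_r _ _ _ _ hab) (@depth_l _ _ _ _ hac) (@subtree_r _ _ _ _ hab) (@subtree_l _ _ _ _ hac) /=.
    move: e3; rewrite /= hM1 => e3; lia.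
  +
    have Ha2 := mem_r pr Har hac. have Hi2 := inv_r Hir.
    have Hd2 : ~~ odd (depth a rr).
      by move: Hd; rewrite (@depth_r _ _ _ _ hab) (@depth_r _ _ _ _ hac) /= !negbK.
    have Hs2 : tsz rr <= m by move: Hs => /=; lia.
    have [A [B [e1 e2 e3]]] := IH rr Hs2 Hi2 Ha2 Hd2.
    exists (Node (Node l b rl) c A), B.
    have es : inorder (Node (Node (Node l b rl) c A) a B) = inorder (Node l b (Node rl c rr)).
      by rewrite /= -e2; catnorm.
    split; [by rewrite /= (gtn_eqF hab) hab' (gtn_eqF hac) hac e1 | exact: es |].
    have hM1 : M R (Node A a B) = M R rr by rewrite /M /= e2.
    have hMs : M R (Node (Node (Node l b rl) c A) a B) = M R (Node l b (Node rl c rr)) by rewrite /M es.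
    have f1 : M R (Node l b (Node rl c rr)) <= M R (Node rl c rr) by apply: M_sub; subt.
    have f2 : M R (Node rl c rr) <= M R rr by apply: (M_sub' R Ha2); subt.
    have f3 : M R (Node l b (Node rl c rr)) <= M R (Node (Node l b rl) c A) by apply: M_sub; rewrite -es; subt.
    have f4 : M R (Node l b (Node rl c rr)) <= M R (Node l b rl) by apply: M_sub; subt.
    have f5 : M R rr = M R (Node l b (Node rl c rr)) -> M R (Node l b (Node rl c rr)) < M R (Node l b rl).
      move=> E; have [E2|E2] := eqVneq (M R (Node l b rl)) (M R (Node l b (Node rl c rr))); last by move/eqP: E2; lia.
      exfalso; apply: (sep R (inorder (Node l b (Node rl c rr))) (inorder (Node l b rl)) (inorder rr) pR HR Hc _ _ (node_nnil _ _ _) (nnil Ha2) _ E2 E) => //.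
      * subt.
      * subt.
      * move=> j k Hj Hk; apply: (sep_pair (inorder l ++ b :: inorder rl) (c :: inorder rr) (inorder (Node l b rl)) (inorder rr) j k _ _ _ Hj Hk) => //.
        -- by move: Hp; rewrite /= -catA.
        -- subt.
    have f5' : M R rr = M R (Node l b (Node rl c rr)) \/ M R rr <> M R (Node l b (Node rl c rr)).
      by case: (eqVneq (M R rr) (M R (Node l b (Node rl c rr)))) => [E|/eqP E]; [left|right].
    rewrite (@depth_r _ _ _ _ hab) (@depth_r _ _ _ _ hac) (@subtree_r _ _ _ _ hab) (@subtree_r _ _ _ _ hac) /=.
    move: e3; rewrite /= hM1 => e3.
    case: f5' => E; [have := f5 E|]; lia.
  + subst; exfalso; move: Hd; rewrite (@depth_r _ _ _ _ hab) /= eqxx //.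
- subst; exists l, r; rewrite /= eqxx; split => //; lia.
Qed.

Lemma splay_main R T (a : nat) : pairwise ltn (inorder R) -> Inv R T -> a \in inorder T ->
  inorder (splay a T) = inorder T /\
  depth a T + 2 * P R T <= 7 * (1 + depth a R) + 2 * P R (splay a T).
Proof.
move=> pR Hi Ha; have [Hp Hc HR] := Hi.
case Hd: (odd (depth a T)); last first.
  have Hd' : ~~ odd (depth a T) by rewrite Hd.
  have [A [B [e1 e2 e3]]] := @se_main R a pR _ _ (leqnn _) Hi Ha Hd'.
  have Hsub := @subtree_mem _ _ Hp Ha.
  have H1 := @Ms_le R _ _ Hsub.
  have hs : splay a T = Node A a B by rewrite /splay Hd /= e1.
  rewrite hs; split; first exact: e2.
  rewrite /M in e3 H1 *; lia.
destruct T as [|l b r]; first by [].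
case: (ltngtP a b) => hab.
- have Hal := mem_l Hp Ha hab. have Hil := inv_l Hi. have [pl _ _] := Hil.
  have Hd' : ~~ odd (depth a l) by move: Hd; rewrite (@depth_l _ _ _ _ hab) /= => ->.
  have [A [B [e1 e2 e3]]] := @se_main R a pR _ _ (leqnn _) Hil Hal Hd'.
  have Hsub := @subtree_mem _ _ pl Hal.
  have H1 := @Ms_le R _ _ Hsub.
  have es : inorder (Node A a (Node B b r)) = inorder (Node l b r) by rewrite /= -e2 -catA.
  have hM1 : M R (Node A a B) = M R l by rewrite /M /= e2.
  have hMs : M R (Node A a (Node B b r)) = M R (Node l b r) by rewrite /M es.
  have hs : splay a (Node l b r) = Node A a (Node B b r) by rewrite /splay Hd /= hab e1.
  rewrite hs; split; first exact: es.
  rewrite (@depth_l _ _ _ _ hab); move: e3; rewrite /= hM1.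
  move=> e3; rewrite /M in e3 H1 hMs *; lia.
- have Har := mem_r Hp Ha hab. have Hir := inv_r Hi. have [pr _ _] := Hir.
  have Hd' : ~~ odd (depth a r) by move: Hd; rewrite (@depth_r _ _ _ _ hab) /= => ->.
  have [A [B [e1 e2 e3]]] := @se_main R a pR _ _ (leqnn _) Hir Har Hd'.
  have Hsub := @subtree_mem _ _ pr Har.
  have H1 := @Ms_le R _ _ Hsub.
  have es : inorder (Node (Node l b A) a B) = inorder (Node l b r) by rewrite /= -e2 -catA.
  have hM1 : M R (Node A a B) = M R r by rewrite /M /= e2.
  have hMs : M R (Node (Node l b A) a B) = M R (Node l b r) by rewrite /M es.
  have hab' : (a < b) = false by rewrite ltnNge (ltnW hab).
  have hs : splay a (Node l b r) = Node (Node l b A) a B by rewrite /splay Hd /= hab' e1.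
  rewrite hs; split; first exact: es.
  rewrite (@depth_r _ _ _ _ hab); move: e3; rewrite /= hM1.
  move=> e3; rewrite /M in e3 H1 hMs *; lia.
- subst; exfalso; move: Hd; rewrite /= eqxx //.
Qed.

Fixpoint Q (g : tree -> int) (t : tree) : int :=
  match t with Leaf => 0%R | Node l k r => (g t + Q g l + Q g r)%R end.

Lemma sum_sub (g : tree -> int) t : pairwise ltn (inorder t) ->
  (\sum_(i <- inorder t) g (subtree i t))%R = Q g t.
Proof.
elim: t => [|l IHl b r IHr] Hp; first by rewrite big_nil.
have [Hl Hr pl pr] := node_facts Hp.
have -> : inorder (Node l b r) = inorder l ++ b :: inorder r by [].
rewrite big_cat big_cons.
have E1 : (\sum_(i <- inorder l) g (subtree i (Node l b r)) = \sum_(i <- inorder l) g (subtree i l))%R.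
  by apply: eq_big_seq => i /Hl h; rewrite subtree_l.
have E2 : (\sum_(i <- inorder r) g (subtree i (Node l b r)) = \sum_(i <- inorder r) g (subtree i r))%R.
  by apply: eq_big_seq => i /Hr h; rewrite subtree_r.
rewrite E1 E2.
have -> : subtree b (Node l b r) = Node l b r by rewrite /= eqxx.
rewrite IHl // IHr //= addrCA addrA //.
Qed.

Lemma Q_P R t : Q (fun s => - (2 * M R s)%:Z)%R t = (- (2 * P R t)%:Z)%R.
Proof. elim: t => [|l IHl b r IHr] /=; first by []. rewrite IHl IHr; lia. Qed.

Lemma phi_eq n R X : is_bst_on n X -> phi n R X = (- (2 * P R X)%:Z)%R.
Proof.
move=> /eqP HX; rewrite /phi.
have -> : index_iota 1 n.+1 = inorder X by rewrite /index_iota subSS subn0 HX.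
rewrite -(Q_P R X) -sum_sub; last by rewrite HX -sorted_pairwise ?iota_ltn_sorted //; exact: ltn_trans.
by apply: eq_bigr.
Qed.

Theorem mainTheorem8 :
  exists c : nat,
    forall (n : nat) (R T : tree) (i : nat),
      is_bst_on n R -> is_bst_on n T -> (1 <= i <= n)%N ->
      ((cost i T)%:Z + phi n R (splay i T) - phi n R T
        <= (c * (1 + depth i R))%:Z)%R.
Proof.
exists 7 => n R T i HR HT Hin.
have pI : pairwise ltn (iota 1 n) by rewrite -sorted_pairwise ?iota_ltn_sorted //; exact: ltn_trans.
move/eqP: (HR) => eR; move/eqP: (HT) => eT.
have pR : pairwise ltn (inorder R) by rewrite eR.
have Hi : Inv R T.
  split; first by rewrite eT.
  - move=> j k u; rewrite eT !mem_iota; lia.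
  - by move=> x; rewrite eT eR.
have Ha : i \in inorder T by rewrite eT mem_iota; lia.
have [e1 e2] := @splay_main R T i pR Hi Ha.
have HT' : is_bst_on n (splay i T) by rewrite /is_bst_on e1 eT.
rewrite (@phi_eq n R _ HT') (@phi_eq n R _ HT) /cost; lia.
Qed.
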